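(* Let $A\in\mathbb{R}^{m\times n}$ have no zero row, with rows $a_1^T,\dots,a_m^T$, let $\mu_1,\dots,\mu_m\in\mathbb{R}$ be arbitrary, ${\bf u}=(\mu_1,\dots,\mu_m)$, and $h_{k,l}=a_k^Ta_l/\|a_l\|_2^2$. For $1\le i<j\le m$ let $$d_{i,j}({\bf u}_i)=\sum_{v=2}^{j-i+1}(-1)^{v-1}\sum_{i=t_1<t_2<\dots<t_v=j}\ \prod_{s=1}^{v-1}\mu_{t_{s+1}}\prod_{s=1}^{v-1}h_{t_s,t_{s+1}},$$ and let $\Omega({\bf u})\in\mathbb{R}^{m\times m}$ be the unit upper triangular matrix with $(i,j)$ entry $d_{i,j}({\bf u}_i)$ for $j>i$. For $j\neq i$ and $c\in\mathbb{R}$ let $E(j,i(c))=I_m+c\,e_je_i^T$ (the identity with entry $c$ at position $(j,i)$). Define $H_1(\mu_1)=I_m$ and $H_i(\mu_i)=\prod_{j=1}^{i-1}E\big(j,i(-\mu_ih_{j,i})\big)$ for $1<i\le m$. Then $$\Omega({\bf u})=H_1(\mu_1)H_2(\mu_2)\cdots H_m(\mu_m).$$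
   Context: $e_k$ denotes the $k$-th standard basis vector of $\mathbb{R}^m$ and $I_m$ the $m\times m$ identity. *)

(* Defs.v *)
From HB Require Import structures.
From mathcomp Require Import all_boot all_order all_algebra.
From mathcomp Require Import reals.
Set Implicit Arguments. Unset Strict Implicit. Unset Printing Implicit Defensive.
Import Order.TTheory GRing.Theory Num.Theory.
Local Open Scope ring_scope.

Section Defs.
Variables (R : realType) (m n : nat).
Implicit Types (A : 'M[R]_(m, n)) (mu : 'I_m -> R).

Definition rownorm2 A (l : 'I_m) : R := \sum_(p < n) A l p ^+ 2.

Definition hcoef A (k l : 'I_m) : R := (\sum_(p < n) A k p * A l p) / rownorm2 A l.

(* t is a chain i = t_1 < t_2 < ... < t_v = j (0-based positions in the tuple) *)
Definition is_chain (i j : 'I_m) v (t : v.-tuple 'I_m) : bool :=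
  [&& sorted (fun a b : 'I_m => (a < b)%N) t,
      nth i t 0 == i & nth i t v.-1 == j].

Definition dcoef A mu (i j : 'I_m) : R :=
  \sum_(2 <= v < (j - i).+2)
    \sum_(t : v.-tuple 'I_m | is_chain i j t)
      (-1) ^+ v.-1 *
      (\prod_(0 <= s < v.-1) mu (nth i t s.+1)) *
      (\prod_(0 <= s < v.-1) hcoef A (nth i t s) (nth i t s.+1)).

Definition Omega A mu : 'M[R]_m :=
  \matrix_(i, j) (if i == j then 1 else if (i < j)%N then dcoef A mu i j else 0).

Definition Eel (j i : 'I_m) (c : R) : 'M[R]_m := 1%:M + c *: delta_mx j i.

Definition oprod (s : seq 'I_m) (M : 'I_m -> 'M[R]_m) : 'M[R]_m :=
  foldr (fun x acc => M x *m acc) 1%:M s.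

Definition Hmat A mu (i : 'I_m) : 'M[R]_m :=
  if (i == 0 :> nat) then 1%:M
  else oprod [seq j : 'I_m <- enum 'I_m | (val j < val i)%N]
              (fun j => Eel j i (- mu i * hcoef A j i)).

End Defs.

(* Main.v *)
Require Import Defs.
From HB Require Import structures.
From mathcomp Require Import all_boot all_order all_algebra.
From mathcomp Require Import reals.
Set Implicit Arguments. Unset Strict Implicit. Unset Printing Implicit Defensive.
Import Order.TTheory GRing.Theory Num.Theory.
Local Open Scope ring_scope.

Lemma big_tuple_cons (R : realType) (T : finType) v (P : pred (v.+1.-tuple T))
  (F : v.+1.-tuple T -> R) :
  \sum_(t | P t) F t =
  \sum_(x : T) \sum_(t : v.-tuple T | P (cons_tuple x t)) F (cons_tuple x t).
Proof.
rewrite pair_big_dep /=.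
rewrite (reindex (fun p : T * v.-tuple T => cons_tuple p.1 p.2)) /=; last first.
  exists (fun t : v.+1.-tuple T => (thead t, behead_tuple t)).
    by move=> [x t] _ /=; congr pair; apply: val_inj.
  by move=> t _; rewrite [RHS]tuple_eta; apply: val_inj.
by apply: eq_bigl => -[x t].
Qed.

Definition T (R : realType) (m n : nat) (A : 'M[R]_(m, n)) (mu : 'I_m -> R) v (i j : 'I_m) : R :=
  \sum_(t : v.-tuple 'I_m | is_chain i j t)
      (-1) ^+ v.-1 *
      (\prod_(0 <= s < v.-1) mu (nth i t s.+1)) *
      (\prod_(0 <= s < v.-1) hcoef A (nth i t s) (nth i t s.+1)).

Definition Nm (R : realType) (m n : nat) (A : 'M[R]_(m, n)) (mu : 'I_m -> R) : 'M[R]_m :=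
  \matrix_(i, k) if (i < k)%N then - mu k * hcoef A i k else 0.

Lemma dcoefE (R : realType) (m n : nat) (A : 'M[R]_(m, n)) (mu : 'I_m -> R) i j :
  dcoef A mu i j = \sum_(2 <= v < (j - i).+2) T A mu v i j.
Proof. by []. Qed.

Lemma T1 (R : realType) (m n : nat) (A : 'M[R]_(m, n)) (mu : 'I_m -> R) i j :
  T A mu 1 i j = (i == j)%:R.
Proof.
rewrite /T big_tuple_cons.
under eq_bigr => x _.
  rewrite big_mkcond (big_pred1 [tuple]); last by move=> t; apply/esym/eqP; exact: tuple0.
  over.
rewrite /=.
under eq_bigr => x _ do rewrite /is_chain /= !big_geq // expr0 !mulr1.
rewrite /= -big_mkcond /=.
case: (eqVneq i j) => [<-|nij].
  by rewrite (big_pred1 i) ?sumr_const ?card_ord // => x; rewrite andbb.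
rewrite big_pred0 // => x; apply/negP => /andP[/eqP-> /eqP]; exact/eqP.
Qed.

Lemma is_chain_head (m : nat) v (k j : 'I_m) (t : v.+1.-tuple 'I_m) :
  is_chain k j t = (k == thead t) && is_chain (thead t) j t.
Proof.
case: t => [[|x s] //= Hs].
rewrite /is_chain /thead (tnth_nth x) /=.
have Hv : (v < size (x :: s))%N by rewrite -(eqP Hs).
rewrite (set_nth_default x k Hv) eqxx (eq_sym k x).
by case: (x == k); case: path.
Qed.

Lemma is_chain_cons (m : nat) v (i j : 'I_m) (t : v.+1.-tuple 'I_m) :
  is_chain i j (cons_tuple i t) = (i < thead t)%N && is_chain (thead t) j t.
Proof.
case: t => [[|x s] //= Hs].
rewrite /is_chain /thead (tnth_nth x) /=.
have Hv : (v < size (x :: s))%N by rewrite -(eqP Hs).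
rewrite (set_nth_default x i Hv) !eqxx /=.
by rewrite andbA.
Qed.

From mathcomp Require Import ring.

Lemma TS (R : realType) (m n : nat) (A : 'M[R]_(m, n)) (mu : 'I_m -> R) v i j :
  T A mu v.+2 i j = \sum_k Nm A mu i k * T A mu v.+1 k j.
Proof.
rewrite /T big_tuple_cons (bigD1 i) //= [X in _ + X]big1 ?addr0; last first.
  move=> x xi; rewrite big_pred0 // => t.
  by rewrite /is_chain /= (negbTE xi) andbF.
under [RHS]eq_bigr => k _ do rewrite mulr_sumr big_mkcond.
rewrite exchange_big [LHS]big_mkcond /=.
apply: eq_bigr => t _.
rewrite -big_mkcond /=.
under [RHS]eq_bigl => k do rewrite is_chain_head.
rewrite is_chain_cons.
case Hc: (is_chain (thead t) j t); last first.
  by rewrite andbF big_pred0 // => k; rewrite andbF.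
rewrite andbT (big_pred1 (thead t)); last by move=> k; rewrite andbT.
rewrite !mxE.
case: ifP => [ilt|_]; last by rewrite mul0r.
case: t ilt Hc => [[|x s] //= Hs] ilt Hc.
rewrite /thead (tnth_nth x) /= in ilt Hc *.
have Hsz : size s = v by apply/eqP.
rewrite !big_nat_recl //=.
have E1 : \prod_(0 <= k < v) mu (nth i s k) = \prod_(0 <= k < v) mu (nth x s k).
  apply: eq_big_nat => k /andP[_ hk]; congr (mu _).
  by apply: set_nth_default; rewrite Hsz.
have E2 : \prod_(0 <= k < v) hcoef A (nth i (x :: s) k) (nth i s k) =
          \prod_(0 <= k < v) hcoef A (nth x (x :: s) k) (nth x s k).
  apply: eq_big_nat => k /andP[_ hk].
  rewrite (set_nth_default x i) /=; last by rewrite Hsz ltnS ltnW.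
  by rewrite (set_nth_default x i) //= Hsz.
rewrite E1 E2 exprS; ring.
Qed.

From mathcomp Require Import zify.

Lemma Tbound (R : realType) (m n : nat) (A : 'M[R]_(m, n)) (mu : 'I_m -> R) v (k j : 'I_m) :
  (j < k + v)%N -> T A mu v.+1 k j = 0.
Proof.
elim: v k => [|v IH] k hv.
  rewrite T1 (_ : (k == j) = false) //; apply/eqP => e.
  by rewrite e addn0 ltnn in hv.
rewrite TS big1 // => l _; rewrite mxE; case: ifP => [kl|_]; last by rewrite mul0r.
rewrite IH ?mulr0 //; lia.
Qed.

Lemma Omega_rec (R : realType) (m n : nat) (A : 'M[R]_(m, n)) (mu : 'I_m -> R) :
  (1%:M - Nm A mu) *m Omega A mu = 1%:M.
Proof.
apply/matrixP => i j; rewrite mulmxBl mul1mx !mxE.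
have Z : forall k : 'I_m, (j < k)%N -> Omega A mu k j = 0.
  move=> k jk; rewrite mxE.
  have -> : (k == j) = false by apply/negbTE; rewrite -val_eqE /= neq_ltn jk orbT.
  by rewrite ltnNge ltnW.
case: (ltngtP i j) => [ij|ji|/val_inj ij]; last first.
- subst j; rewrite eqxx big1 ?subr0 // => k _; rewrite /Nm mxE.
  by case: ifP => [ik|_]; [rewrite Z ?mulr0 | rewrite mul0r].
- have -> : (i == j) = false by apply/negbTE; rewrite -val_eqE /= neq_ltn ji orbT.
  rewrite big1 ?subr0 // => k _; rewrite /Nm mxE.
  by case: ifP => [ik|_]; [rewrite Z ?mulr0 //; lia | rewrite mul0r].
have -> : (i == j) = false by apply/negbTE; rewrite -val_eqE /= neq_ltn ij.
apply/eqP; rewrite subr_eq0; apply/eqP.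
rewrite dcoefE !big_add1 /=.
under eq_big_nat => v _ do rewrite TS.
rewrite exchange_big /=.
apply: eq_bigr => k _.
rewrite -mulr_sumr /Nm [in RHS]mxE.
rewrite !mxE.
case: ifP => [ik|_]; last by rewrite !mul0r.
congr (_ * _).
case E: (j - i)%N => [|d]; first lia.
rewrite big_nat_recl // T1.
case: (ltngtP k j) => [kj|jk|/val_inj kj]; last first.
- subst k; rewrite eqxx big1_seq ?addr0 // => v _.
  by rewrite Tbound //; lia.
- have -> : (k == j) = false by apply/negbTE; rewrite -val_eqE /= neq_ltn jk orbT.
  rewrite add0r big1_seq // => v _; rewrite Tbound //; lia.
have -> : (k == j) = false by apply/negbTE; rewrite -val_eqE /= neq_ltn kj.
rewrite add0r dcoefE !big_add1 /=.
rewrite (big_cat_nat _ (n := (j - k)%N)) //=; last by lia.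
rewrite [X in _ + X]big1_seq ?addr0 //.
move=> v /andP[_]; rewrite mem_index_iota => /andP[hv _].
by rewrite Tbound //; lia.
Qed.

Definition Ncol (R : realType) (m n : nat) (A : 'M[R]_(m, n)) (mu : 'I_m -> R) (x : 'I_m) : 'M[R]_m :=
  \matrix_(k, l) if (l == x) && (k < x)%N then - mu x * hcoef A k x else 0.

Lemma oprod_E (R : realType) (m : nat) (x : 'I_m) (c : 'I_m -> R) (s : seq 'I_m) :
  all (fun j => j != x) s ->
  oprod s (fun j => Eel j x (c j)) = 1%:M + \sum_(j <- s) c j *: delta_mx j x.
Proof.
elim: s => [|y s IH] /=; first by rewrite big_nil addr0.
move=> /andP[yx H]; rewrite IH // big_cons /Eel.
have Z : \sum_(i <- s) delta_mx y x *m (c i *: delta_mx i x) = 0 :> 'M[R]_m.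
  apply: big1_seq => j /andP[_ js]; rewrite -scalemxAr mul_delta_mx_cond.
  have /allP/(_ j js) := H; rewrite eq_sym => /negbTE ->.
  by rewrite mulr0n scaler0.
rewrite mulmxDl mul1mx mulmxDr mulmx1 -scalemxAl mulmx_sumr Z scaler0 addr0.
by rewrite -addrA [X in _ + X = _]addrC.
Qed.

Lemma Hmat_E (R : realType) (m n : nat) (A : 'M[R]_(m, n)) (mu : 'I_m -> R) (x : 'I_m) :
  Hmat A mu x = 1%:M + Ncol A mu x.
Proof.
rewrite /Hmat; case: ifP => [x0|_].
  have -> : Ncol A mu x = 0; last by rewrite addr0.
  by apply/matrixP => k l; rewrite !mxE (eqP x0) ltn0 andbF.
rewrite oprod_E; last first.
  apply/allP => j; rewrite mem_filter => /andP[jx _].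
  by rewrite -val_eqE /= neq_ltn jx.
congr (_ + _); apply/matrixP => k l.
rewrite summxE big_filter big_enum_cond /= !mxE.
under eq_bigr => j _ do rewrite !mxE.
case: (boolP (l == x)) => lx; last first.
  by rewrite big1 // => j _; rewrite andbF mulr0.
rewrite big_mkcond (bigD1 k) //= big1 ?addr0.
  by rewrite eqxx mulr1; case: ifP.
move=> j jk; case: ifP => // _.
by rewrite (_ : (k == j) = false) ?mulr0 //; apply/negbTE; rewrite eq_sym.
Qed.

Lemma NcolNcol (R : realType) (m n : nat) (A : 'M[R]_(m, n)) (mu : 'I_m -> R) (x y : 'I_m) :
  (x <= y)%N -> Ncol A mu y *m Ncol A mu x = 0.
Proof.
move=> hxy; apply/matrixP => k l; rewrite !mxE big1 // => p _; rewrite !mxE.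
case: eqP => [->|_]; last by rewrite mul0r.
by rewrite (_ : (y < x)%N = false) ?andbF ?mulr0 //; rewrite ltnNge hxy.
Qed.

Lemma oprod_inv (R : realType) (m n : nat) (A : 'M[R]_(m, n)) (mu : 'I_m -> R) (s : seq 'I_m) :
  sorted (fun a b : 'I_m => (a < b)%N) s ->
  oprod s (fun x => 1%:M + Ncol A mu x) *m (1%:M - \sum_(x <- s) Ncol A mu x) = 1%:M.
Proof.
elim: s => [|x s IH] /=; first by rewrite big_nil subr0 mulmx1.
move=> Hp.
have Hs := path_sorted Hp.
have /andP[Hall _] : all (fun y : 'I_m => (x < y)%N) s && sorted (fun a b : 'I_m => (a < b)%N) s.
  by rewrite -path_sortedE // => a b c; exact: ltn_trans.
have Z : \sum_(y <- s) Ncol A mu y *m Ncol A mu x = 0.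
  apply: big1_seq => y /andP[_ ys]; apply: NcolNcol.
  by have /allP/(_ y ys) := Hall; exact: ltnW.
have -> : 1%:M - \sum_(y <- x :: s) Ncol A mu y =
          (1%:M - \sum_(y <- s) Ncol A mu y) *m (1%:M - Ncol A mu x).
  rewrite big_cons mulmxBl mul1mx mulmxBr mulmx1 mulmx_suml Z subr0.
  by rewrite opprD addrA.
rewrite mulmxA -(mulmxA (1%:M + Ncol A mu x)) IH // mulmx1.
by rewrite mulmxBr mulmx1 mulmxDl mul1mx NcolNcol // addr0 addrK.
Qed.

Lemma sumNcol (R : realType) (m n : nat) (A : 'M[R]_(m, n)) (mu : 'I_m -> R) :
  \sum_(x <- enum 'I_m) Ncol A mu x = Nm A mu.
Proof.
apply/matrixP => k l; rewrite summxE big_enum /= !mxE.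
under eq_bigr => x _ do rewrite mxE.
rewrite (bigD1 l) //= big1 ?addr0; first by rewrite eqxx.
by move=> x xl; rewrite eq_sym (negbTE xl).
Qed.

Theorem theorem3p9 (R : realType) (m n : nat) (A : 'M[R]_(m, n)) (mu : 'I_m -> R)
  (hA : forall k : 'I_m, row k A != 0) :
  Omega A mu = oprod (enum 'I_m) (Hmat A mu).
Proof.
have -> : oprod (enum 'I_m) (Hmat A mu) = oprod (enum 'I_m) (fun x => 1%:M + Ncol A mu x).
  rewrite /oprod; elim: (enum 'I_m) => //= a s ->; by rewrite Hmat_E.
have Hs : sorted (fun a b : 'I_m => (a < b)%N) (enum 'I_m).
  by have := iota_ltn_sorted 0 m; rewrite -val_enum_ord sorted_map.
have H1 := oprod_inv A mu Hs; rewrite sumNcol in H1.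
have E := congr1 (fun M => M *m Omega A mu) H1.
rewrite /= -mulmxA Omega_rec mulmx1 mul1mx in E.
by rewrite E.
Qed.
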